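(* Let $n\ge1$ and $u,v\in\mathcal S_n$. Then $u$ is strongly shift equivalent to $v$ if and only if $u\sim_{ss}v$.
   Context: $[n]=\{1,\ldots,n\}$; $\mathcal S_n$ is the set of permutations of $[n]$ as words. Rigid shift: for a word $u=u_1\cdots u_n$ over $\mathbb P$, an integer $h\ge0$ (cut height) and an integer $t$, suppose that for every $i$ with $u_i>h$ we have $1\le i+t\le n$ and $u_{i+t}\ge h$. Then the word $v$ with $v_j=\min(u_j,h)+\max(u_{j-t}-h,0)$ for $j\in[n]$ (the second term taken $0$ if $j-t\notin[n]$) is a rigid shift of $u$; geometrically, one cuts the skyline diagram of $u$ (columns of $u_i$ unit squares) at height $h$ and rigidly translates all squares above the cut horizontally by $t$ so each moved column rests on a column of height $h$. Two permutations are strongly shift equivalent if one can be obtained from the other by a finite sequence of rigid shifts. Super-strong Wilf equivalence: for finite words $u,w$ over $\mathbb P$, $j$ is an embedding index of $u$ in $w$ if $j+|u|-1\le|w|$ and $u_k\le w_{j+k-1}$ for all $k$; $Em(u,w)$ is the set of such $j$; $u\sim_{ss}v$ if there is a bijection $f$ of the set of finite words over $\mathbb P$ preserving length and sum of letters with $Em(u,w)=Em(v,f(w))$ for all $w$. *)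

(* Defs.v *)
From mathcomp Require Import all_boot all_order all_algebra.
Set Implicit Arguments. Unset Strict Implicit. Unset Printing Implicit Defensive.
Import Order.TTheory GRing.Theory Num.Theory.

(* Words are [seq nat]; positions are 0-based internally (position i here is
   position i+1 in the paper). *)

(* letter of u at (0-based, integer) position k; 0 if k is out of range *)
Definition letter_at (u : seq nat) (k : int) : nat :=
  match k with Posz m => nth 0 u m | Negz _ => 0 end.

Definition rigid_shift_ok (u : seq nat) (h : nat) (t : int) : Prop :=
  forall i : nat, (i < size u)%N -> (h < nth 0 u i)%N ->
    ((0 <= i%:Z + t)%R /\ (i%:Z + t < (size u)%:Z)%R) /\
    (h <= letter_at u (i%:Z + t))%N.

(* v_j = min(u_j,h) + max(u_{j-t} - h, 0)  (truncated subtraction = max(.,0)) *)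
Definition rigid_shift (u : seq nat) (h : nat) (t : int) : seq nat :=
  mkseq (fun j => minn (nth 0 u j) h + (letter_at u (j%:Z - t) - h)) (size u).

Definition is_rigid_shift (u v : seq nat) : Prop :=
  exists (h : nat) (t : int), rigid_shift_ok u h t /\ v = rigid_shift u h t.

Inductive strongly_shift_equiv : seq nat -> seq nat -> Prop :=
| sse_refl u : strongly_shift_equiv u u
| sse_step u w v : is_rigid_shift u w -> strongly_shift_equiv w v ->
                   strongly_shift_equiv u v.

Definition is_perm_word (n : nat) (u : seq nat) : Prop := perm_eq u (iota 1 n).

Definition pword := {w : seq nat | all (fun x => 0 < x)%N w}.

(* embedding indices (1-based, as in the paper) *)
Definition Em (u w : seq nat) : nat -> bool := fun j =>
  [&& (1 <= j)%N, (j + size u - 1 <= size w)%N &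
      all (fun k => nth 0 u k <= nth 0 w (j + k - 1))%N (iota 0 (size u))].

Definition ss_wilf_equiv (u v : seq nat) : Prop :=
  exists f : pword -> pword,
    bijective f /\
    (forall w, size (val (f w)) = size (val w)) /\
    (forall w, sumn (val (f w)) = sumn (val w)) /\
    (forall w (j : nat), Em u (val w) j = Em v (val (f w)) j).

(* Main.v *)
Require Import Defs.
From mathcomp Require Import all_boot all_order all_algebra zify.
Set Implicit Arguments. Unset Strict Implicit. Unset Printing Implicit Defensive.
Import Order.TTheory GRing.Theory Num.Theory.


Lemma letter_at_pos u x : (0 < letter_at u x)%N -> exists i : nat, x = (Posz i) /\ (i < size u)%N.
Proof.
case: x => [i|i] //= H; exists i; split=>//.
rewrite ltnNge; apply/negP=> Hi; by rewrite nth_default in H.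
Qed.

Lemma count_shift_le (P Q : int -> bool) (L : nat) (t : int) :
  (forall x, Q x -> (0 <= x)%R /\ (x < (Posz L))%R) ->
  (forall x, P x -> Q (x + t)%R) ->
  (count (fun i : nat => P (Posz i)) (iota 0 L) <= count (fun i : nat => Q (Posz i)) (iota 0 L))%N.
Proof.
move=> HQ HPQ.
rewrite -!size_filter.
rewrite -(size_map (fun i : nat => ((Posz i) + t)%R)).
rewrite -(size_map (fun i : nat => (Posz i)) [seq i <- iota 0 L | Q (Posz i)]).
apply: uniq_leq_size.
- rewrite map_inj_uniq ?filter_uniq ?iota_uniq //.
  by move=> a b /addIr [].
- move=> y /mapP [i]; rewrite mem_filter mem_iota => /andP[Pi _] ->.
  have HQ' := HPQ _ Pi. have [h1 h2] := HQ _ HQ'.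
  move: HQ' h1 h2; case E: ((Posz i) + t)%R => [k|k] //= Qk _ h2.
  apply/mapP; exists k => //. rewrite mem_filter mem_iota Qk /=. lia.
Qed.

Lemma count_shift (P Q : int -> bool) (L : nat) (t : int) :
  (forall x, P x -> (0 <= x)%R /\ (x < (Posz L))%R) ->
  (forall x, Q x -> (0 <= x)%R /\ (x < (Posz L))%R) ->
  (forall x, Q x = P (x - t)%R) ->
  count (fun i : nat => P (Posz i)) (iota 0 L) = count (fun i : nat => Q (Posz i)) (iota 0 L).
Proof.
move=> HP HQ HPQ; apply/eqP; rewrite eqn_leq; apply/andP; split.
- apply: (count_shift_le (t:=t)) => // x Px; by rewrite HPQ addrK.
- apply: (count_shift_le (t:=(-t)%R)) => // x Qx; by rewrite -HPQ.
Qed.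


Lemma letter_at_out u x : (~~ ((0 <= x)%R && (x < Posz (size u))%R)) -> letter_at u x = 0.
Proof.
move=> H; case E: (letter_at u x) => [|k] //.
have [i [Ex Hi]] : exists i : nat, x = Posz i /\ (i < size u)%N by apply: letter_at_pos; rewrite E.
by move: H; rewrite Ex /= ltz_nat Hi.
Qed.

Lemma ok_cond u h0 t y : rigid_shift_ok u h0 t -> (h0 < letter_at u y)%N ->
  ((0 <= y + t)%R /\ (y + t < Posz (size u))%R) /\ (h0 <= letter_at u (y + t)%R)%N.
Proof.
move=> ok H. have [i [Ey Hi]] : exists i : nat, y = Posz i /\ (i < size u)%N
  by apply: letter_at_pos; lia.
subst y. exact: ok.
Qed.

Lemma rs_letter u h0 t (j : nat) : (j < size u)%N ->
  letter_at (rigid_shift u h0 t) (Posz j) = minn (nth 0 u j) h0 + (letter_at u (Posz j - t)%R - h0).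
Proof. by move=> Hj; rewrite /= nth_mkseq. Qed.

Lemma rs_letter_out u h0 t x : (~~ ((0 <= x)%R && (x < Posz (size u))%R)) ->
  letter_at (rigid_shift u h0 t) x = 0.
Proof. by move=> H; apply: letter_at_out; rewrite size_mkseq. Qed.

Lemma size_rs u h0 t : size (rigid_shift u h0 t) = size u.
Proof. by rewrite size_mkseq. Qed.

Lemma rs_layer u h0 t h x : rigid_shift_ok u h0 t -> (0 < h)%N ->
  (h <= letter_at (rigid_shift u h0 t) x)%N =
  if (h <= h0)%N then (h <= letter_at u x)%N else (h <= letter_at u (x - t)%R)%N.
Proof.
move=> ok hpos.
case Hx: ((0 <= x)%R && (x < Posz (size u))%R); last first.
  have Hx' : ~~ ((0 <= x)%R && (x < Posz (size u))%R) by rewrite Hx.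
  clear Hx.
  rewrite rs_letter_out // (letter_at_out Hx').
  have -> : (h <= 0)%N = false by lia.
  case: ifP => Hh //.
  case Hb: (h <= letter_at u (x - t)%R)%N => //.
  have [[h1 h2] _] := ok_cond ok (y := (x - t)%R) ltac:(lia).
  by rewrite subrK in h1 h2; rewrite h1 h2 in Hx'.
case: x Hx => [j|j] // /andP[_ Hj]; rewrite ltz_nat in Hj.
rewrite (rs_letter h0 t Hj).
set a := nth 0 u j; set b := letter_at u (Posz j - t)%R.
change (letter_at u (Posz j)) with a.
case: (leqP b h0) => Hb.
  have -> : b - h0 = 0 by lia.
  case: ifP => Hh; apply/idP/idP; lia.
have [_ Ha] := ok_cond ok Hb. rewrite subrK /= -/a in Ha.
case: ifP => Hh; apply/idP/idP; lia.
Qed.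


Definition bndf (z : seq nat) (E : seq nat) (m : nat) : nat :=
  foldr (fun e acc => maxn (letter_at z (Posz m - Posz e)%R) acc) 1 E.
Definition bnd z E L := mkseq (bndf z E) L.
Definition Lam z h E L :=
  count (fun m : nat => has (fun e => h <= letter_at z (Posz m - Posz e)%R) E) (iota 0 L).
Definition validE n L (E : seq nat) := all (fun e => e + n <= L) E.

Lemma bndf_ge1 z E m : 0 < bndf z E m.
Proof. rewrite /bndf; elim: E => [|e E IH] //=; by rewrite leq_max IH orbT. Qed.

Lemma bndf_layer z E m h :
  (h.+2 <= bndf z E m) = has (fun e => h.+2 <= letter_at z (Posz m - Posz e)%R) E.
Proof. rewrite /bndf; elim: E => [|e E IH] //=; by rewrite leq_max IH. Qed.

Lemma letter_le_bndf z E m e : e \in E -> letter_at z (Posz m - Posz e)%R <= bndf z E m.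
Proof.
rewrite /bndf; elim: E => [|e' E IH] //=; rewrite inE => /orP[/eqP->|H]; rewrite leq_max ?leqnn //.
by rewrite IH ?orbT.
Qed.

Lemma bndf_le z E m N : (forall x, letter_at z x <= N.+1) -> bndf z E m <= N.+1.
Proof. move=> H; rewrite /bndf; elim: E => [|e E IH] //=; by rewrite geq_max H IH. Qed.

Lemma sum_ind x N : x <= N -> \sum_(h < N) (h < x) = x.
Proof.
elim: N x => [|N IH] x Hx; first by rewrite big_ord0; lia.
rewrite big_ord_recr /=.
case: (ltnP N x) => H.
  have -> : x = N.+1 by lia.
  have := IH N (leqnn N).
  suff -> : \sum_(i < N) (i < N.+1) = \sum_(i < N) (i < N) by lia.
  apply: eq_bigr => i _; have := ltn_ord i; lia.
rewrite IH; [lia|lia].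
Qed.

Lemma bndf_decomp z E m N : (forall x, letter_at z x <= N.+1) ->
  bndf z E m = 1 + \sum_(h < N) has (fun e => h.+2 <= letter_at z (Posz m - Posz e)%R) E.
Proof.
move=> H.
under eq_bigr do rewrite -bndf_layer.
have H1 := bndf_ge1 z E m. have H2 := bndf_le E m H.
have := @sum_ind (bndf z E m).-1 N ltac:(lia).
suff -> : \sum_(h < N) (h < (bndf z E m).-1) = \sum_(h < N) (h.+2 <= bndf z E m) by move=> ->; lia.
apply: eq_bigr => i _; lia.
Qed.

Lemma sumn_bnd z E L N : (forall x, letter_at z x <= N.+1) ->
  sumn (bnd z E L) = L + \sum_(h < N) Lam z h.+2 E L.
Proof.
move=> H.
rewrite /bnd /mkseq sumnE big_map.
under eq_bigr do rewrite (bndf_decomp _ _ H).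
rewrite big_split /= sum1_size size_iota; congr (_ + _).
rewrite exchange_big /=; apply: eq_bigr => h _.
by rewrite /Lam -sumn_count sumnE big_map.
Qed.

Lemma Em_bnd z x E L : size x = L -> all (fun a => 0 < a) x -> 0 < size z -> validE (size z) L E ->
  (forall e, e \in E -> Em z x e.+1) <-> (forall m, m < L -> nth 0 (bnd z E L) m <= nth 0 x m).
Proof.
move=> Hs Hpos Hz Hv; split.
- move=> H m Hm; rewrite nth_mkseq //.
  elim: E H {Hv} => [|e E IH] H; rewrite /bndf /=.
    by have := (all_nthP 0 Hpos) m ltac:(lia).
  rewrite geq_max; apply/andP; split; last first.
    by apply: IH => e' He'; apply: H; rewrite inE He' orbT.
  case E0: (letter_at z (Posz m - Posz e)%R) => [|l] //.
  have [k [Ek Hk]] : exists k : nat, (Posz m - Posz e)%R = Posz k /\ k < size z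
    by apply: letter_at_pos; rewrite E0.
  have := H e (mem_head _ _); rewrite /Em => /and3P[_ _ /allP/(_ k)].
  rewrite mem_iota Hk => /(_ isT).
  have -> : e.+1 + k - 1 = m by lia.
  by rewrite -E0 Ek.
- move=> H e He; rewrite /Em /=.
  have Hve : e + size z <= L by exact: (allP Hv).
  apply/andP; split; first by lia.
  apply/allP => k; rewrite mem_iota => /andP[_ Hk].
  have -> : e.+1 + k - 1 = e + k by lia.
  apply: leq_trans (H (e + k) ltac:(lia)).
  rewrite nth_mkseq; last by lia.
  have := letter_le_bndf z (e + k) He.
  suff -> : (Posz (e + k) - Posz e)%R = Posz k by [].
  by rewrite PoszD addrAC subrr add0r.
Qed.

Lemma nth_le_sumn (s : seq nat) i : nth 0 s i <= sumn s.
Proof. elim: s i => [|a s IH] [|i] //=; [exact: leq_addr | exact: leq_trans (IH i) (leq_addl _ _)]. Qed.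

Lemma letter_le_sumn z x : letter_at z x <= sumn z.
Proof. case: x => [i|i] //=; exact: nth_le_sumn. Qed.

Lemma Lam_supp z h E L x : 0 < h -> validE (size z) L E ->
  has (fun e => h <= letter_at z (x - Posz e)%R) E -> (0 <= x)%R /\ (x < Posz L)%R.
Proof.
move=> hpos Hv /hasP [e He Hh].
have [k [Ek Hk]] : exists k : nat, (x - Posz e)%R = Posz k /\ k < size z
  by apply: letter_at_pos; lia.
have Hve : e + size z <= L by exact: (allP Hv).
have -> : x = Posz (k + e) by rewrite PoszD -Ek subrK.
split => //; rewrite ltz_nat; lia.
Qed.

Lemma Lam_rs u h0 t h E L : rigid_shift_ok u h0 t -> 0 < h -> validE (size u) L E ->
  Lam (rigid_shift u h0 t) h E L = Lam u h E L.
Proof.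
move=> ok hpos Hv.
case: (leqP h h0) => Hh.
  apply: eq_count => m; apply: eq_has => e /=; by rewrite rs_layer // Hh.
rewrite /Lam; symmetry.
apply: (@count_shift (fun x => has (fun e => h <= letter_at u (x - Posz e)%R) E)
                     (fun x => has (fun e => h <= letter_at (rigid_shift u h0 t) (x - Posz e)%R) E) L t).
- by move=> x; apply: Lam_supp => //.
- by move=> x; apply: Lam_supp => //; rewrite size_rs.
- move=> x; apply: eq_has => e /=. rewrite rs_layer // leqNgt Hh /=.
  by rewrite addrAC.
Qed.

Lemma rs_letter_bound u h0 t x : rigid_shift_ok u h0 t ->
  letter_at (rigid_shift u h0 t) x <= (h0 + sumn u).+1.
Proof.
move=> ok; case: (leqP (letter_at (rigid_shift u h0 t) x) (h0 + sumn u).+1) => // H.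
have := rs_layer x ok (h := letter_at (rigid_shift u h0 t) x) ltac:(lia).
rewrite leqnn.
have -> : (letter_at (rigid_shift u h0 t) x <= h0) = false by lia.
move=> /esym Hl; have := letter_le_sumn u (x - t)%R; lia.
Qed.

Lemma sumbnd_rs u h0 t E L : rigid_shift_ok u h0 t -> validE (size u) L E ->
  sumn (bnd (rigid_shift u h0 t) E L) = sumn (bnd u E L).
Proof.
move=> ok Hv.
have H1 : forall x, letter_at u x <= (h0 + sumn u).+1.
  move=> x; have := letter_le_sumn u x; lia.
have H2 := fun x => rs_letter_bound x ok.
rewrite (sumn_bnd _ _ H1) (sumn_bnd _ _ H2); congr (_ + _).
apply: eq_bigr => h _; exact: Lam_rs.
Qed.

Lemma count_layer z h :
  count (fun a => h <= a) z = count (fun i : nat => h <= letter_at z (Posz i)) (iota 0 (size z)).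
Proof. by rewrite -[z in LHS](mkseq_nth 0 z) /mkseq count_map. Qed.

Lemma count_rs u h0 t h : rigid_shift_ok u h0 t ->
  count (fun a => h <= a) (rigid_shift u h0 t) = count (fun a => h <= a) u.
Proof.
move=> ok; case: h => [|h].
  by rewrite !(eq_count (a2 := predT)) // !count_predT size_rs.
rewrite !count_layer size_rs.
case: (leqP h.+1 h0) => Hh.
  apply: eq_count => i; by rewrite (rs_layer _ ok) // Hh.
symmetry; apply: (@count_shift (fun x => h.+1 <= letter_at u x)
     (fun x => h.+1 <= letter_at (rigid_shift u h0 t) x) (size u) t).
- move=> x Hx; have [i [-> Hi]] := letter_at_pos (x := x) (u := u) ltac:(lia).
  split => //; by rewrite ltz_nat.
- move=> x Hx; have [i [-> Hi]] := letter_at_pos (x := x) (u := rigid_shift u h0 t) ltac:(lia).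
  split => //; by rewrite ltz_nat -(size_rs u h0 t).
- move=> x; by rewrite (rs_layer _ ok) // leqNgt Hh.
Qed.


Fixpoint Wl (L s : nat) : seq (seq nat) :=
  match L with
  | 0 => if s == 0 then [:: [::]] else [::]
  | L'.+1 => [seq a :: x | a <- iota 1 s, x <- Wl L' (s - a)]
  end.
Definition Wu L s := undup (Wl L s).

Lemma mem_Wl L s x : (x \in Wl L s) = [&& size x == L, sumn x == s & all (fun a => 0 < a) x].
Proof.
elim: L s x => [|L IH] s x /=.
  by case: s => [|s]; case: x => [|a x]; rewrite //= ?inE.
apply/idP/idP.
- move/allpairsPdep => [a [y [Ha Hy ->]]].
  rewrite IH in Hy; rewrite mem_iota in Ha; move/andP: Ha => [Ha1 Ha2].
  move: Hy => /and3P [/eqP Hs /eqP Hsum Hp] /=.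
  rewrite Hs eqxx Hp andbT /=; apply/andP; split => //.
  have aux : forall a b s : nat, 0 < a -> a < 1 + s -> b = s - a -> a + b = s by move=> *; lia.
  by apply/eqP; apply: aux.
- case: x => [|a y] //= /and3P [Hs Hsum /andP[Ha Hp]].
  move/eqP: Hsum => Hsum.
  apply/allpairsPdep; exists a, y; split => //.
    rewrite mem_iota; move: Ha Hsum; clear; case: a => [|a] //= Ha Hsum; lia.
  rewrite IH Hp andbT; apply/andP; split; first by rewrite eqSS in Hs.
  apply/eqP; move: Hsum; clear; case: a => [|a] Hsum; lia.
Qed.

Lemma mem_Wu L s x : (x \in Wu L s) = [&& size x == L, sumn x == s & all (fun a => 0 < a) x].
Proof. by rewrite mem_undup mem_Wl. Qed.

Lemma uniq_Wu L s : uniq (Wu L s).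
Proof. exact: undup_uniq. Qed.

Definition ge (b x : seq nat) := all (fun m => nth 0 b m <= nth 0 x m) (iota 0 (size b)).

Lemma sumn_nth (x : seq nat) : sumn x = \sum_(m <- iota 0 (size x)) nth 0 x m.
Proof. by rewrite -[x in LHS](mkseq_nth 0 x) /mkseq sumnE big_map. Qed.

Lemma count_ge_le L s b b' : size b = L -> size b' = L -> all (fun a => 0 < a) b' ->
  sumn b = sumn b' -> count (ge b) (Wu L s) <= count (ge b') (Wu L s).
Proof.
move=> Hb Hb' Hp' Hsum.
pose phi (x : seq nat) := mkseq (fun m => nth 0 x m - nth 0 b m + nth 0 b' m) L.
rewrite -!size_filter -(size_map phi).
apply: uniq_leq_size.
- rewrite map_inj_in_uniq ?filter_uniq ?uniq_Wu //.
  move=> x y; rewrite !mem_filter !mem_Wu => /andP[Gx /and3P[/eqP Sx _ _]] /andP[Gy /and3P[/eqP Sy _ _]] E.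
  apply: (@eq_from_nth _ 0); first by rewrite Sx Sy.
  move=> m; rewrite Sx => Hm.
  have := congr1 (fun z => nth 0 z m) E; rewrite /phi !nth_mkseq //=.
  have := (allP Gx) m; have := (allP Gy) m; rewrite mem_iota Hb Hm /= => /(_ isT) H1 /(_ isT) H2.
  lia.
- move=> y /mapP [x]; rewrite mem_filter mem_Wu => /andP[Gx /and3P[/eqP Sx /eqP Ssx Px]] ->.
  rewrite mem_filter mem_Wu size_mkseq eqxx /=.
  have Hle : forall m, m < L -> nth 0 b m <= nth 0 x m.
    by move=> m Hm; have := (allP Gx) m; rewrite mem_iota Hb Hm /= => /(_ isT).
  apply/and3P; split.
  + apply/allP => m; rewrite mem_iota Hb' => /andP[_ Hm].
    rewrite nth_mkseq //; have := Hle m Hm; lia.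
  + apply/eqP; rewrite -Ssx.
    rewrite /phi /mkseq sumnE big_map.
    apply: (@addIn (sumn b)).
    rewrite [in RHS]Hsum (sumn_nth b') (sumn_nth b) (sumn_nth x) Hb Hb' Sx -!big_split /=.
    apply: eq_big_seq => m; rewrite mem_iota => /andP[_ Hm]; have := Hle m Hm; lia.
  + apply/allP => a /(nthP 0) [m]; rewrite size_mkseq => Hm <-.
    rewrite nth_mkseq //; have := (all_nthP 0 Hp') m; rewrite Hb' => /(_ Hm); lia.
Qed.

Lemma count_ge L s b b' : size b = L -> size b' = L -> all (fun a => 0 < a) b ->
  all (fun a => 0 < a) b' ->
  sumn b = sumn b' -> count (ge b) (Wu L s) = count (ge b') (Wu L s).
Proof.
move=> *; apply/eqP; rewrite eqn_leq; apply/andP; split; exact: count_ge_le.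
Qed.


Lemma count_as_sum (T : Type) (P : pred T) (W : seq T) : count P W = \sum_(x <- W) (P x : nat).
Proof. by rewrite -sumn_count sumnE big_map. Qed.

Lemma sup_sum (T : eqType) (K : nat) (W : seq T) (F : T -> {set 'I_K}) (A : {set 'I_K}) :
  count (fun x => A \subset F x) W = \sum_(B : {set 'I_K} | A \subset B) count (fun x => F x == B) W.
Proof.
rewrite count_as_sum.
under [in RHS]eq_bigr => B _ do rewrite (count_as_sum (fun x => F x == B)).
rewrite (exchange_big_dep xpredT) //=; apply: eq_bigr => x _.
case: (boolP (A \subset F x)) => H.
  rewrite (bigD1 (F x)) /=; last by rewrite H.
  rewrite big1; first by rewrite eq_refl.
  move=> B /andP[_ HB]; by rewrite eq_sym (negbTE HB).
rewrite big1 // => B; rewrite andbT => HB; case: eqP => // E; by rewrite E HB in H.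
Qed.

Lemma mobius (T : eqType) (K : nat) (W : seq T) (F G : T -> {set 'I_K}) :
  (forall A : {set 'I_K}, count (fun x => A \subset F x) W = count (fun x => A \subset G x) W) ->
  forall A : {set 'I_K}, count (fun x => F x == A) W = count (fun x => G x == A) W.
Proof.
move=> H.
suff: forall d (A : {set 'I_K}), K - #|A| < d -> count (fun x => F x == A) W = count (fun x => G x == A) W.
  by move=> S A; apply: (S (K - #|A|).+1).
elim=> [|d IH] A Hd //.
have := H A; rewrite !sup_sum (bigD1 A) //= (bigD1 A (P := fun B => A \subset B)) //=.
have -> : \sum_(i : {set 'I_K} | (A \subset i) && (i != A)) count (fun x => F x == i) W =
          \sum_(i : {set 'I_K} | (A \subset i) && (i != A)) count (fun x => G x == i) W.
  apply: eq_bigr => B /andP[HAB HBA]; apply: IH.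
  have HP : A \proper B by rewrite properEneq eq_sym HBA HAB.
  have := proper_card HP; have := max_card B; rewrite card_ord; lia.
by move/addIn.
Qed.


Definition EmSet L z x : {set 'I_L.+1} := [set j : 'I_L.+1 | Em z x j].
Definition clsq z x := [seq Em z x j | j <- iota 0 (size x).+1].

Definition beta_eq n u v := forall L E, validE n L E -> sumn (bnd u E L) = sumn (bnd v E L).

Lemma sup_eq n u v L s (A : {set 'I_L.+1}) : size u = n -> size v = n -> 0 < n -> beta_eq n u v ->
  count (fun x => A \subset EmSet L u x) (Wu L s) = count (fun x => A \subset EmSet L v x) (Wu L s).
Proof.
move=> Hu Hv Hn Hb.
case: (boolP [forall j in A, (1 <= j) && (j + n - 1 <= L)]) => HA.
- set E := [seq (nat_of_ord j).-1 | j <- enum A].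
  have HvE : validE n L E.
    apply/allP => e /mapP [j]; rewrite mem_enum => Hj ->.
    have := (forall_inP HA) j Hj; lia.
  have key : forall z, size z = n -> {in Wu L s, forall x,
      (A \subset EmSet L z x) = ge (bnd z E L) x}.
    move=> z Hz x; rewrite mem_Wu => /and3P[/eqP Sx _ Px].
    have Hval : validE (size z) L E by rewrite Hz.
    have := Em_bnd Sx Px (ltac:(lia) : 0 < size z) Hval => [[H1 H2]].
    apply/idP/idP.
    + move=> HS; apply/allP => m; rewrite mem_iota size_mkseq => /andP[_ Hm].
      apply: H1 => // e /mapP [j]; rewrite mem_enum => Hj ->.
      have := (forall_inP HA) j Hj => /andP[Hj1 _].
      have := (subsetP HS) j Hj; rewrite inE; by rewrite prednK.
    + move=> HG; apply/subsetP => j Hj; rewrite inE.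
      have := (forall_inP HA) j Hj => /andP[Hj1 _].
      rewrite -(prednK Hj1); apply: H2.
        move=> m Hm; have := (allP HG) m; rewrite mem_iota size_mkseq Hm; by apply.
      apply/mapP; exists j => //; by rewrite mem_enum.
  rewrite (eq_in_count (key u Hu)) (eq_in_count (key v Hv)).
  apply: count_ge; rewrite ?size_mkseq //.
  + apply/allP => a /mapP [m _ ->]; exact: bndf_ge1.
  + apply/allP => a /mapP [m _ ->]; exact: bndf_ge1.
  + exact: Hb.
- have [j Hj Hnot] := forall_inPn HA.
  have zero : forall z, size z = n -> {in Wu L s, forall x, (A \subset EmSet L z x) = false}.
    move=> z Hz x; rewrite mem_Wu => /and3P[/eqP Sx _ _].
    apply/negbTE/negP => /subsetP /(_ j Hj); rewrite inE /Em Sx Hz => /and3P[H1 H2 _].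
    by rewrite H1 H2 in Hnot.
  rewrite (eq_in_count (zero u Hu)) (eq_in_count (zero v Hv)).
  by rewrite !(eq_count (a2 := pred0)) // !count_pred0.
Qed.

Lemma clsq_eq_set z y L (Q : seq bool) : size y = L -> size Q = L.+1 ->
  (clsq z y == Q) = (EmSet L z y == [set j : 'I_L.+1 | nth false Q j]).
Proof.
move=> Hy HQ; apply/eqP/eqP => [<- | HE].
  apply/setP => j; rewrite !inE /clsq (nth_map 0) ?size_iota ?nth_iota ?Hy //.
apply: (@eq_from_nth _ false); first by rewrite size_map size_iota Hy.
move=> i; rewrite size_map size_iota Hy => Hi.
have := congr1 (fun S : {set 'I_L.+1} => (Ordinal Hi) \in S) HE; rewrite !inE /= => <-.
by rewrite (nth_map 0) ?size_iota ?nth_iota ?Hy.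
Qed.

Lemma size_clsq z x : size (clsq z x) = (size x).+1.
Proof. by rewrite size_map size_iota. Qed.

Lemma cls_count n u v L s (Q : seq bool) : size u = n -> size v = n -> 0 < n -> beta_eq n u v ->
  count (fun y => clsq u y == Q) (Wu L s) = count (fun y => clsq v y == Q) (Wu L s).
Proof.
move=> Hu Hv Hn Hb.
case: (eqVneq (size Q) L.+1) => HQ.
  have key : forall z, {in Wu L s, forall y, (clsq z y == Q) = (EmSet L z y == [set j : 'I_L.+1 | nth false Q j])}.
    move=> z y; rewrite mem_Wu => /and3P[/eqP Sy _ _]; exact: clsq_eq_set.
  rewrite (eq_in_count (key u)) (eq_in_count (key v)).
  apply: mobius => A; exact: sup_eq Hu Hv Hn Hb.
have zero : forall z, {in Wu L s, forall y, (clsq z y == Q) = false}.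
  move=> z y; rewrite mem_Wu => /and3P[/eqP Sy _ _].
  apply/negbTE/eqP => E; move: HQ; by rewrite -E size_clsq Sy eqxx.
rewrite (eq_in_count (zero u)) (eq_in_count (zero v)).
by rewrite !(eq_count (a2 := pred0)) // !count_pred0.
Qed.


Definition CE u v := forall L s (Q : seq bool),
  count (fun y => clsq u y == Q) (Wu L s) = count (fun y => clsq v y == Q) (Wu L s).

Definition fmap u v (x : seq nat) : seq nat :=
  nth x [seq y <- Wu (size x) (sumn x) | clsq v y == clsq u x]
        (index x [seq y <- Wu (size x) (sumn x) | clsq u y == clsq u x]).

Lemma fmap_spec u v x : CE u v -> all (fun a => 0 < a) x ->
  fmap u v x \in Wu (size x) (sumn x) /\ clsq v (fmap u v x) = clsq u x.
Proof.
move=> Hce Hx.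
have xA : x \in [seq y <- Wu (size x) (sumn x) | clsq u y == clsq u x].
  by rewrite mem_filter eqxx mem_Wu !eqxx Hx.
have Hsz : size [seq y <- Wu (size x) (sumn x) | clsq u y == clsq u x] =
           size [seq y <- Wu (size x) (sumn x) | clsq v y == clsq u x] by rewrite !size_filter Hce.
have Hi : index x [seq y <- Wu (size x) (sumn x) | clsq u y == clsq u x] <
          size [seq y <- Wu (size x) (sumn x) | clsq v y == clsq u x] by rewrite -Hsz index_mem.
have := mem_nth x Hi; rewrite mem_filter => /andP[/eqP H1 H2].
by rewrite /fmap; split.
Qed.

Lemma fmapK u v x : CE u v -> all (fun a => 0 < a) x -> fmap v u (fmap u v x) = x.
Proof.
move=> Hce Hx.
have [Hy Hc] := fmap_spec Hce Hx.
move: Hy; rewrite mem_Wu => /and3P[/eqP E1 /eqP E2 _].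
set y := fmap u v x in E1 E2 Hc *.
rewrite [fmap v u y]/fmap E1 E2 Hc.
have xA : x \in [seq y <- Wu (size x) (sumn x) | clsq u y == clsq u x].
  by rewrite mem_filter eqxx mem_Wu !eqxx Hx.
have Hsz : size [seq y <- Wu (size x) (sumn x) | clsq u y == clsq u x] =
           size [seq y <- Wu (size x) (sumn x) | clsq v y == clsq u x] by rewrite !size_filter Hce.
have Hi : index x [seq y <- Wu (size x) (sumn x) | clsq u y == clsq u x] <
          size [seq y <- Wu (size x) (sumn x) | clsq v y == clsq u x] by rewrite -Hsz index_mem.
rewrite /y /fmap index_uniq ?filter_uniq ?uniq_Wu //.
by rewrite nth_index.
Qed.

Lemma Em_cls z x j : 0 < size z ->
  Em z x j = if j <= size x then nth false (clsq z x) j else false.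
Proof.
move=> Hz; case: ifP => Hj.
  by rewrite (nth_map 0) ?size_iota ?nth_iota //; lia.
rewrite /Em; apply/negbTE/negP => /and3P[_ H _]; lia.
Qed.

Lemma CE_sym u v : CE u v -> CE v u.
Proof. by move=> H L s Q; rewrite H. Qed.

Lemma ss_of_CE u v n : size u = n -> size v = n -> 0 < n -> CE u v -> ss_wilf_equiv u v.
Proof.
move=> Hu Hv Hn Hce.
have Hce' := CE_sym Hce.
have fpos : forall a b (w : pword), CE a b -> all (fun c => 0 < c) (fmap a b (val w)).
  move=> a b w H; have [Hy _] := fmap_spec H (valP w).
  by move: Hy; rewrite mem_Wu => /and3P[_ _].
pose f (w : pword) : pword := insubd w (fmap u v (val w)).
pose g (w : pword) : pword := insubd w (fmap v u (val w)).
have vf : forall w, val (f w) = fmap u v (val w) by move=> w; rewrite /f insubdK //; apply: fpos.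
have vg : forall w, val (g w) = fmap v u (val w) by move=> w; rewrite /g insubdK //; apply: fpos.
exists f; split; [|split; [|split]].
- exists g => w; apply: val_inj.
  + by rewrite (vg (f w)) (vf w) fmapK // (valP w).
  + by rewrite (vf (g w)) (vg w) fmapK // (valP w).
- move=> w; rewrite vf; have [Hy _] := fmap_spec Hce (valP w).
  by move: Hy; rewrite mem_Wu => /and3P[/eqP -> _ _].
- move=> w; rewrite vf; have [Hy _] := fmap_spec Hce (valP w).
  by move: Hy; rewrite mem_Wu => /and3P[_ /eqP -> _].
- move=> w j; rewrite vf; have [Hy Hc] := fmap_spec Hce (valP w).
  move: Hy; rewrite mem_Wu => /and3P[/eqP Sy _ _].
  rewrite (Em_cls _ _ (ltac:(lia) : 0 < size u)) (Em_cls _ _ (ltac:(lia) : 0 < size v)) Sy Hc //.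
Qed.


Lemma ss_trans u w v : ss_wilf_equiv u w -> ss_wilf_equiv w v -> ss_wilf_equiv u v.
Proof.
move=> [f1 [b1 [s1 [m1 e1]]]] [f2 [b2 [s2 [m2 e2]]]].
exists (f2 \o f1); split; [exact: bij_comp|split; [|split]] => /= x.
- by rewrite s2 s1.
- by rewrite m2 m1.
- by move=> j; rewrite e1 e2.
Qed.

Lemma beta_rs u h0 t : rigid_shift_ok u h0 t -> beta_eq (size u) u (rigid_shift u h0 t).
Proof. move=> ok L E Hv; by rewrite sumbnd_rs. Qed.

Lemma CE_of_beta n u v : size u = n -> size v = n -> 0 < n -> beta_eq n u v -> CE u v.
Proof. move=> Hu Hv Hn Hb L s Q; exact: cls_count Hu Hv Hn Hb. Qed.

Lemma dir1 u v : strongly_shift_equiv u v -> 0 < size u -> ss_wilf_equiv u v.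
Proof.
elim=> [z|z w y [h [t [ok ->]]] _ IH] Hz.
  apply: (@ss_of_CE z z (size z)) => //; by move=> L s Q.
apply: ss_trans (IH _); last by rewrite size_rs.
apply: (@ss_of_CE _ _ (size z)) => //; first by rewrite size_rs.
apply: (@CE_of_beta (size z)) => //; first by rewrite size_rs.
exact: beta_rs.
Qed.


Lemma sumn_le (a c : seq nat) : size a = size c ->
  (forall m, m < size a -> nth 0 a m <= nth 0 c m) -> sumn a <= sumn c.
Proof.
move=> Hs H; rewrite (sumn_nth a) (sumn_nth c) -Hs.
rewrite !big_seq; apply: leq_sum => m; rewrite mem_iota => /andP[_ Hm]; exact: H.
Qed.

Lemma le_beta n a b (F : pword -> pword) : size a = n -> size b = n -> 0 < n ->
  (forall w, size (val (F w)) = size (val w)) -> (forall w, sumn (val (F w)) = sumn (val w)) ->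
  (forall w j, Em a (val w) j = Em b (val (F w)) j) ->
  forall L E, validE n L E -> sumn (bnd b E L) <= sumn (bnd a E L).
Proof.
move=> Ha Hb Hn Fs Fm Fe L E Hv.
have Hpos : all (fun c => 0 < c) (bnd a E L).
  apply/allP => c /mapP [m _ ->]; exact: bndf_ge1.
pose w : pword := exist _ (bnd a E L) Hpos.
have Sw : size (val w) = L by rewrite /= size_mkseq.
have Va : validE (size a) L E by rewrite Ha.
have Vb : validE (size b) L E by rewrite Hb.
have [_ H2] := Em_bnd Sw Hpos (ltac:(lia) : 0 < size a) Va.
have HEa : forall e, e \in E -> Em a (val w) e.+1 by apply: H2 => m Hm.
have SFw : size (val (F w)) = L by rewrite Fs.
have [H1' _] := Em_bnd SFw (valP (F w)) (ltac:(lia) : 0 < size b) Vb.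
have Hle := H1' (fun e He => etrans (esym (Fe w e.+1)) (HEa e He)).
rewrite -[sumn (bnd a E L)]/(sumn (val w)) -Fm.
apply: sumn_le; first by rewrite size_mkseq SFw.
by move=> m; rewrite size_mkseq; apply: Hle.
Qed.

Lemma beta_of_ss n u v : size u = n -> size v = n -> 0 < n -> ss_wilf_equiv u v -> beta_eq n u v.
Proof.
move=> Hu Hv Hn [f [[g fg gf] [fs [fm fe]]]] L E HV.
apply/eqP; rewrite eqn_leq; apply/andP; split.
- apply: (@le_beta n v u g) => // w.
  + by rewrite -[in RHS](gf w) fs.
  + by rewrite -[in RHS](gf w) fm.
  + by move=> j; rewrite fe gf.
- exact: (@le_beta n u v f).
Qed.

Definition Mc z h (F K : seq nat) L :=
  count (fun m : nat => all (fun f => h <= letter_at z (Posz m - Posz f)%R) F &&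
                        all (fun k => ~~ (h <= letter_at z (Posz m - Posz k)%R)) K) (iota 0 L).
Definition SM z N F K L := \sum_(h < N) Mc z h.+2 F K L.

Lemma count_split (T : Type) (a b : pred T) s :
  count (fun x => a x && b x) s + count (fun x => a x && ~~ b x) s = count a s.
Proof. elim: s => //= x s <-; case: (a x); case: (b x) => /=; lia. Qed.

Lemma Mc_nil z h K L : Mc z h [::] K L + Lam z h K L = L.
Proof.
have := count_predC (fun m : nat => has (fun e => h <= letter_at z (Posz m - Posz e)%R) K) (iota 0 L).
rewrite size_iota => HL; rewrite -[in RHS]HL addnC /Mc /Lam; congr (_ + _).
apply: eq_count => m /=.
by clear HL; elim: K => //= k K ->; rewrite negb_or.
Qed.

Lemma Mc_cons z h e F K L : Mc z h (e :: F) K L + Mc z h F (e :: K) L = Mc z h F K L.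
Proof.
rewrite /Mc -(count_split (fun m : nat => all (fun f => h <= letter_at z (Posz m - Posz f)%R) F &&
                        all (fun k => ~~ (h <= letter_at z (Posz m - Posz k)%R)) K) (fun m : nat => h <= letter_at z (Posz m - Posz e)%R)).
congr (_ + _); apply: eq_count => m /=.
- by case: (h <= _); rewrite ?andbT ?andbF.
- by case: (h <= _); rewrite /= ?andbT ?andbF.
Qed.

Lemma SM_eq n u v N L : size u = n -> size v = n ->
  (forall x, letter_at u x <= N.+1) -> (forall x, letter_at v x <= N.+1) -> beta_eq n u v ->
  forall F, validE n L F -> forall K, validE n L K -> SM u N F K L = SM v N F K L.
Proof.
move=> Hu Hv Bu Bv Hb; elim=> [|e F IH] HF K HK.
  have := Hb L K HK; rewrite (sumn_bnd _ _ Bu) (sumn_bnd _ _ Bv) => /addnI HL.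
  apply: (@addIn (\sum_(h < N) Lam u h.+2 K L)).
  rewrite [in RHS]HL /SM -!big_split /=; apply: eq_bigr => h _; by rewrite !Mc_nil.
move: HF => /= /andP[He HF].
have HK' : validE n L (e :: K) by rewrite /= He HK.
apply: (@addIn (SM u N F (e :: K) L)); rewrite [in RHS](IH HF _ HK').
rewrite /SM -!big_split /=.
have := IH HF K HK; rewrite /SM => E1.
rewrite (eq_bigr (fun h : 'I_N => Mc u h.+2 F K L)); last by move=> h _; rewrite Mc_cons.
rewrite E1; apply: eq_bigr => h _; by rewrite Mc_cons.
Qed.


Lemma iota_snoc m n : iota m n.+1 = iota m n ++ [:: m + n].
Proof. by rewrite -addn1 iotaD. Qed.

Lemma count_iota_ge n h : 0 < h -> count (fun a => h <= a) (iota 1 n) = n.+1 - h.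
Proof.
move=> hpos; elim: n => [|n IH]; first by rewrite /=; lia.
rewrite iota_snoc.
rewrite count_cat IH /= add1n; case: (leqP h n.+1) => H; lia.
Qed.

Lemma perm_count_ge n u h : is_perm_word n u -> 0 < h -> count (fun a => h <= a) u = n.+1 - h.
Proof. by move=> /permP Hp hpos; rewrite Hp count_iota_ge. Qed.

Lemma translate_eq (P Q : int -> bool) (L : nat) (t : int) :
  (forall x, P x -> (0 <= x)%R /\ (x < Posz L)%R) ->
  (forall x, Q x -> (0 <= x)%R /\ (x < Posz L)%R) ->
  (forall x, P x -> Q (x + t)%R) ->
  count (fun i : nat => Q (Posz i)) (iota 0 L) <= count (fun i : nat => P (Posz i)) (iota 0 L) ->
  forall y, Q y = P (y - t)%R.
Proof.
move=> HP HQ HPQ Hc y.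
apply/idP/idP; last by move=> Hy; have := HPQ _ Hy; rewrite subrK.
move=> Qy.
set sP := [seq Posz i | i <- iota 0 L & P (Posz i)].
set sQ := [seq Posz i | i <- iota 0 L & Q (Posz i)].
have Hsub : {subset [seq (x + t)%R | x <- sP] <= sQ}.
  move=> z /mapP [x /mapP [i]]; rewrite mem_filter mem_iota => /andP[Pi _] -> ->.
  have HQ' := HPQ _ Pi. have [h1 h2] := HQ _ HQ'.
  move: HQ' h1 h2; case E: (Posz i + t)%R => [k|k] //= Qk _ h2.
  apply/mapP; exists k => //. rewrite mem_filter mem_iota Qk /=. lia.
have Hu : uniq [seq (x + t)%R | x <- sP].
  rewrite map_inj_uniq; last by move=> a b /addIr.
  rewrite map_inj_uniq; last by move=> a b [].
  by rewrite filter_uniq ?iota_uniq.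
have Hsz : size sQ <= size [seq (x + t)%R | x <- sP] by rewrite !size_map !size_filter.
have [_ Heq] := uniq_min_size Hu Hsub Hsz.
have [h1 h2] := HQ _ Qy.
have : y \in sQ.
  move: h1 h2 Qy; case: y => [k|k] //= _ h2 Qk.
  apply/mapP; exists k => //. rewrite mem_filter mem_iota Qk /=. lia.
rewrite -Heq => /mapP [x /mapP [i]]; rewrite mem_filter => /andP[Pi _] -> ->.
by rewrite addrK.
Qed.

Lemma layer1_pos z x : all (fun a => 0 < a) z ->
  (1 <= letter_at z x) = ((0 <= x)%R && (x < Posz (size z))%R).
Proof.
move=> Hz; apply/idP/idP.
  move=> H; have [i [-> Hi]] := letter_at_pos H; by rewrite /= ltz_nat Hi.
case: x => [i|i] // /andP[_ Hi]; rewrite ltz_nat in Hi.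
exact: (all_nthP 0 Hz).
Qed.

Lemma sse_snoc u w w' : strongly_shift_equiv u w -> is_rigid_shift w w' -> strongly_shift_equiv u w'.
Proof.
elim=> [z|z y x Hr _ IH] H.
  by apply: sse_step H (sse_refl _).
exact: sse_step Hr (IH H).
Qed.


Definition Gl (w : seq nat) g n := [seq i <- iota 0 n | g <= nth 0 w i].
Definition Fl (w : seq nat) g n := [seq n - a | a <- Gl w g n].

Lemma Fl_valid w g n : validE n (n + n) (Fl w g n).
Proof. apply/allP => f /mapP [a _ ->]; lia. Qed.

Lemma probe_pred z h w g n m : 0 < g -> size w = n ->
  all (fun f => h <= letter_at z (Posz m - Posz f)%R) (Fl w g n) ->
  forall x, g <= letter_at w x -> h <= letter_at z (x + (Posz m - Posz n))%R.
Proof.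
move=> gpos Hw H x Hx.
have [a [Ex Ha]] := letter_at_pos (x := x) (u := w) ltac:(lia).
subst x.
have Hf : n - a \in Fl w g n.
  apply/mapP; exists a => //; rewrite mem_filter mem_iota /=; apply/andP; split => //; lia.
have := (allP H) _ Hf.
suff -> : (Posz m - Posz (n - a))%R = (Posz a + (Posz m - Posz n))%R by [].
rewrite Hw in Ha; lia.
Qed.

Lemma Mc_w_pos w g n : 0 < n -> Mc w g (Fl w g n) [::] (n + n) > 0.
Proof.
move=> Hn; rewrite /Mc -has_count; apply/hasP; exists n; first by rewrite mem_iota; lia.
rewrite andbT; apply/allP => f /mapP [a]; rewrite mem_filter mem_iota => /andP [Hga Ha] ->.
suff -> : (Posz n - Posz (n - a))%R = Posz a by [].
lia.
Qed.

Lemma Mc_zero z h w g n : 0 < g -> 0 < h -> size w = n -> size z = n ->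
  count (fun a => h <= a) z < count (fun a => g <= a) w -> Mc z h (Fl w g n) [::] (n + n) = 0.
Proof.
move=> gpos hpos Hw Hz Hlt.
apply/eqP; rewrite -leqn0 leqNgt -has_count; apply/negP => /hasP [m _ Hm].
rewrite andbT in Hm.
have HT := probe_pred gpos Hw Hm.
suff : count (fun a => g <= a) w <= count (fun a => h <= a) z by lia.
rewrite !count_layer Hw Hz.
apply: (@count_shift_le (fun x => g <= letter_at w x) (fun x => h <= letter_at z x) n (Posz m - Posz n)%R) => //.
move=> x Hx; have [i [-> Hi]] := letter_at_pos (x := x) (u := z) ltac:(lia).
split => //; by rewrite ltz_nat -Hz.
Qed.

Lemma extract (a b : nat -> nat) N i : i < N -> (forall j, j < N -> j != i -> a j = b j) ->
  \sum_(j < N) a j = \sum_(j < N) b j -> a i = b i.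
Proof.
move=> Hi H.
rewrite (bigD1 (Ordinal Hi)) // [in RHS](bigD1 (Ordinal Hi)) //=.
have -> : \sum_(j < N | j != Ordinal Hi) a j = \sum_(j < N | j != Ordinal Hi) b j.
  apply: eq_bigr => j Hj; apply: H => //; exact: ltn_ord.
by move/addIn.
Qed.

Lemma count0_bound z k : count (fun a => k.+1 <= a) z = 0 -> forall x, letter_at z x <= k.
Proof.
move=> H x; case: (leqP (letter_at z x) k) => // Hlt.
have [i [Ex Hi]] := letter_at_pos (x := x) (u := z) ltac:(lia).
have : has (fun a => k.+1 <= a) z.
  apply/hasP; exists (nth 0 z i); first exact: mem_nth.
  by move: Hlt; rewrite Ex.
by rewrite has_count H.
Qed.

Definition LE g (w v : seq nat) := forall h, 0 < h -> h < g -> forall x,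
  (h <= letter_at w x) = (h <= letter_at v x).

Lemma step n u v g w : 0 < n -> is_perm_word n u -> is_perm_word n v -> 2 <= g -> g <= n ->
  size w = n -> (forall h, count (fun a => h <= a) w = count (fun a => h <= a) u) ->
  beta_eq n w v -> LE g w v ->
  exists t, rigid_shift_ok w g.-1 t /\ forall x, (g <= letter_at v x) = (g <= letter_at w (x - t)%R).
Proof.
move=> Hn Pu Pv Hg2 Hgn Hw CNT Hb HLE.
have Hv : size v = n by rewrite (perm_size Pv) size_iota.
have cw : forall h, 0 < h -> count (fun a => h <= a) w = n.+1 - h by move=> h hp; rewrite CNT (perm_count_ge Pu).
have cv : forall h, 0 < h -> count (fun a => h <= a) v = n.+1 - h by move=> h hp; rewrite (perm_count_ge Pv).
have Bw : forall x, letter_at w x <= n.+1.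
  move=> x; apply: leq_trans (count0_bound _ x) (leqnSn n); rewrite cw //; lia.
have Bv : forall x, letter_at v x <= n.+1.
  move=> x; apply: leq_trans (count0_bound _ x) (leqnSn n); rewrite cv //; lia.
have HSM := SM_eq Hw Hv Bw Bv Hb (Fl_valid w g n) (K := [::]) isT.
have HI : Mc w (g - 2).+2 (Fl w g n) [::] (n + n) = Mc v (g - 2).+2 (Fl w g n) [::] (n + n).
  apply: (@extract (fun j => Mc w j.+2 (Fl w g n) [::] (n + n)) (fun j => Mc v j.+2 (Fl w g n) [::] (n + n)) n) => //.
  - lia.
  - move=> j Hj Hji.
    case: (ltnP j.+2 g) => Hjg.
      apply: eq_count => m /=; rewrite !andbT; apply: eq_all => f; apply: HLE => //.
    have Hjg' : g < j.+2 by move: Hji => /eqP Hji; lia.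
    rewrite (@Mc_zero w j.+2 w g n) //; last by rewrite cw // cw //; lia.
    rewrite (@Mc_zero v j.+2 w g n) //; last by rewrite cv // cw //; lia.
    lia.
  - lia.
have Hg : (g - 2).+2 = g by lia.
rewrite Hg in HI.
have := Mc_w_pos w g Hn; rewrite HI /Mc -has_count => /hasP [m _ Hm].
rewrite andbT in Hm.
have HT := probe_pred (ltac:(lia) : 0 < g) Hw Hm.
set t := (Posz m - Posz n)%R in HT.
have Htr : forall y, (g <= letter_at v y) = (g <= letter_at w (y - t)%R).
  apply: (@translate_eq (fun x => g <= letter_at w x) (fun x => g <= letter_at v x) n t).
  - move=> x Hx; have [i [-> Hi]] := letter_at_pos (x := x) (u := w) ltac:(lia).
    split => //; by rewrite ltz_nat -Hw.
  - move=> x Hx; have [i [-> Hi]] := letter_at_pos (x := x) (u := v) ltac:(lia).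
    split => //; by rewrite ltz_nat -Hv.
  - exact: HT.
  - have e1 := count_layer w g; have e2 := count_layer v g.
    rewrite Hw in e1; rewrite Hv in e2.
    rewrite -e1 -e2 cw ?cv //; lia.
exists t; split => //.
move=> i Hi Hgi.
have Hvt := HT (Posz i) ltac:(simpl; lia).
have [k [Ek Hk]] := letter_at_pos (x := (Posz i + t)%R) (u := v) ltac:(lia).
split.
  rewrite Ek; split => //; rewrite ltz_nat; lia.
rewrite (HLE g.-1) //; lia.
Qed.


Lemma perm_pos n u : is_perm_word n u -> all (fun a => 0 < a) u.
Proof.
move=> Pu; rewrite all_count (perm_count_ge Pu) // (perm_size Pu) size_iota; lia.
Qed.

Lemma loop n u v : 0 < n -> is_perm_word n u -> is_perm_word n v ->
  forall d g w, g + d = n.+1 -> 2 <= g -> strongly_shift_equiv u w -> size w = n ->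
  (forall h, count (fun a => h <= a) w = count (fun a => h <= a) u) ->
  beta_eq n w v -> LE g w v -> strongly_shift_equiv u v.
Proof.
move=> Hn Pu Pv; elim=> [|d IH] g w Hgd Hg2 Hs Hw CNT Hb HLE.
  have Hv : size v = n by rewrite (perm_size Pv) size_iota.
  suff <- : w = v by [].
  have cw : forall h, 0 < h -> count (fun a => h <= a) w = n.+1 - h by move=> h hp; rewrite CNT (perm_count_ge Pu).
  have cv : forall h, 0 < h -> count (fun a => h <= a) v = n.+1 - h by move=> h hp; rewrite (perm_count_ge Pv).
  have Bw : forall x, letter_at w x <= n by apply: count0_bound; rewrite cw //; lia.
  have Bv : forall x, letter_at v x <= n by apply: count0_bound; rewrite cv //; lia.
  have Pw : all (fun a => 0 < a) w by rewrite all_count cw // Hw; lia.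
  have Pv' := perm_pos Pv.
  apply: (@eq_from_nth _ 0); first by rewrite Hw Hv.
  move=> i; rewrite Hw => Hi.
  have a1 := (all_nthP 0 Pw) i ltac:(lia).
  have b1 := (all_nthP 0 Pv') i ltac:(lia).
  have a2 : nth 0 w i <= n := Bw (Posz i).
  have b2 : nth 0 v i <= n := Bv (Posz i).
  have E1 := HLE (nth 0 w i) a1 (ltac:(lia) : nth 0 w i < g) (Posz i).
  have E2 := HLE (nth 0 v i) b1 (ltac:(lia) : nth 0 v i < g) (Posz i).
  simpl in E1, E2; rewrite leqnn in E1 E2.
  by apply/eqP; rewrite eqn_leq -E1 E2 /= leqnn.
have Hgn : g <= n by lia.
have [t [ok Htr]] := step Hn Pu Pv Hg2 Hgn Hw CNT Hb HLE.
apply: (IH g.+1 (rigid_shift w g.-1 t)).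
- lia.
- lia.
- apply: sse_snoc Hs _; by exists g.-1, t.
- by rewrite size_rs.
- by move=> h; rewrite count_rs.
- move=> L E HV; rewrite sumbnd_rs //; last by rewrite Hw.
  exact: Hb.
- move=> h hp hg x; rewrite rs_layer //.
  case: ifP => Hh.
    apply: HLE => //; lia.
  have -> : h = g by lia.
  by rewrite Htr.
Qed.

Unset Implicit Arguments.
Set Strict Implicit.
Theorem mainTheorem12 (n : nat) (u v : seq nat) :
  (1 <= n)%N -> is_perm_word n u -> is_perm_word n v ->
  (strongly_shift_equiv u v <-> ss_wilf_equiv u v).
Proof.
move=> Hn Pu Pv.
have Hu : size u = n by rewrite (perm_size Pu) size_iota.
have Hv : size v = n by rewrite (perm_size Pv) size_iota.
split.
- move=> H; apply: dir1 H _; lia.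
- move=> H; have Hb := beta_of_ss Hu Hv Hn H.
  apply: (@loop n u v Hn Pu Pv n.-1 2 u) => //.
  + lia.
  + exact: sse_refl.
  + move=> h hp hg x.
    have -> : h = 1 by lia.
    by rewrite !layer1_pos ?Hu ?Hv ?(perm_pos Pu) ?(perm_pos Pv).
Qed.
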